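(* If $\mathcal{R}$ is a weak bisimulation, then any parallel extension $\mathcal{R}'$ of $\mathcal{R}$ is also a weak bisimulation.
   Context: Setting: a graph-based calculus for wireless networks with local broadcast. Networks are built as $M,N::=G\langle\Phi\rangle \mid M\backslash c \mid M\oplus_D N$. Here $G$ is a finite undirected graph of locations. $\Phi$ maps each location to a sequential process. $M\oplus_D N$ is the composition of networks with disjoint location sets, adding edges $D\subseteq|M|\times|N|$. $|M|$ denotes the set of locations of $M$. Labelled transitions $M\xrightarrow{\delta}M'$ have labels $\delta::=p:\alpha\mid\tau$, where $\alpha::=cv\mid\overline{c}v$ is a receive or broadcast of $v$ on channel $c$ at location $p$. The rules for composition are: - (N-Bcast): if $M\xrightarrow{p:\overline{c}v}M'$, $N\xrightarrow{q:cv}N'$ and $(p,q)\in D$, then $M\oplus_DN\xrightarrow{p:\overline{c}v}M'\oplus_DN'$ and $N\oplus_DM\xrightarrow{p:\overline{c}v}N'\oplus_DM'$. - (N-ParL) and (N-ParR): either component may move alone. - (N-Res1): $M\xrightarrow{p:\overline{c}v}M'$ gives $M\backslash c\xrightarrow{\tau}M'\backslash c$. $M\xrightarrow{\tau^{\ast}}M'$ means a finite, possibly empty, sequence of $\tau$-steps. $M\stackrel{p:\alpha}{\Longrightarrow}M'$ means $M\xrightarrow{\tau^{\ast}}M_1\xrightarrow{p:\alpha}M_1'\xrightarrow{\tau^{\ast}}M'$ for some $M_1,M_1'$. A localized relation is $\mathcal{R}\subseteq{\bf Net}\times\mathcal{P}({\sf Loc}^2)\times{\bf Net}$ with $E\subseteq|M|\times|N|$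 whenever $(M,E,N)\in\mathcal{R}$. It is symmetric if $(M,E,N)\in\mathcal{R}$ implies $(N,E^{-1},M)\in\mathcal{R}$. A weak bisimulation is a symmetric localized relation such that, whenever $(M,E,N)\in\mathcal{R}$, both of the following hold: - $M\xrightarrow{\tau}M'$ implies $N\xrightarrow{\tau^{\ast}}N'$ with $(M',E,N')\in\mathcal{R}$ for some $N'$. - $M\xrightarrow{p:\alpha}M'$ implies $N\stackrel{q:\alpha}{\Longrightarrow}N'$ for some $q$ with $(p,q)\in E$ and $(M',E,N')\in\mathcal{R}$. A triple $(D,D',E)$ with $D\subseteq A\times B$, $D'\subseteq A\times B'$ and $E\subseteq B\times B'$ is adapted if, for all $(a,b,b')$ with $(b,b')\in E$, we have $(a,b)\in D\iff(a,b')\in D'$. A localized relation $\mathcal{R}'$ is a parallel extension of $\mathcal{R}$ if every $(U,F,V)\in\mathcal{R}'$ satisfies all of the following: - $U=O\oplus_C M$ and $V=O\oplus_D N$ for some network $O$, some $(M,E,N)\in\mathcal{R}$, $C\subseteq|O|\times|M|$ and $D\subseteq|O|\times|N|$. - $(C,D,E)$ is adapted. - $F={\rm Id}_{|O|}\cup E$. *)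

(* Defs.v *)
From Stdlib Require Import List Relations.
Import ListNotations.

Set Implicit Arguments.

Section Calculus.

Context {Loc Chan Val Proc : Type}.

Record graph := Graph {
  gverts : list Loc;
  gedge : Loc -> Loc -> Prop;
  gedge_sym : forall x y, gedge x y -> gedge y x;
  gedge_in : forall x y, gedge x y -> In x gverts /\ In y gverts
}.

Inductive action := Recv (c : Chan) (v : Val) | Bcast (c : Chan) (v : Val).

Inductive label := Tau | Act (p : Loc) (a : action).

(* M, N ::= G<Phi> | M\c | M (+)_D N,  with D a relation between the
   locations of the left and of the right component. *)
Inductive net :=
| Base (G : graph) (Phi : Loc -> Proc)
| Res (M : net) (c : Chan)
| Par (M : net) (D : Loc -> Loc -> Prop) (N : net).

Fixpoint locs (M : net) : Loc -> Prop :=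
  match M with
  | Base G _ => fun x => In x (gverts G)
  | Res M _ => locs M
  | Par M _ N => fun x => locs M x \/ locs N x
  end.

Fixpoint wf (M : net) : Prop :=
  match M with
  | Base _ _ => True
  | Res M _ => wf M
  | Par M D N =>
      wf M /\ wf N /\ (forall x, locs M x -> locs N x -> False) /\
      (forall x y, D x y -> locs M x /\ locs N y)
  end.

Definition chan_of (a : action) : Chan :=
  match a with Recv c _ => c | Bcast c _ => c end.

(* The LTS.  The semantics of base networks G<Phi> (i.e. of sequential
   processes) is a parameter [bstep]; actions of a base network take place at
   a location of its graph. *)
Variable bstep : graph -> (Loc -> Proc) -> label -> (Loc -> Proc) -> Prop.

Inductive step : net -> label -> net -> Prop :=
| S_Base G Phi l Phi' :
    bstep G Phi l Phi' ->
    (forall p a, l = Act p a -> In p (gverts G)) ->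
    step (Base G Phi) l (Base G Phi')
| S_BcastL M D N M' N' p q c v :
    step M (Act p (Bcast c v)) M' -> step N (Act q (Recv c v)) N' -> D p q ->
    step (Par M D N) (Act p (Bcast c v)) (Par M' D N')
| S_BcastR M D N M' N' p q c v :
    step N (Act q (Bcast c v)) N' -> step M (Act p (Recv c v)) M' -> D p q ->
    step (Par M D N) (Act q (Bcast c v)) (Par M' D N')
| S_ParL M D N M' l : step M l M' -> step (Par M D N) l (Par M' D N)
| S_ParR M D N N' l : step N l N' -> step (Par M D N) l (Par M D N')
| S_Res1 M M' c p v :
    step M (Act p (Bcast c v)) M' -> step (Res M c) Tau (Res M' c)
| S_Res2 M M' c l :
    step M l M' ->
    (forall p a, l = Act p a -> chan_of a <> c) ->
    step (Res M c) l (Res M' c).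

Definition taus : net -> net -> Prop :=
  clos_refl_trans net (fun M M' => step M Tau M').

Definition wstep (M : net) (p : Loc) (a : action) (M' : net) : Prop :=
  exists M1 M1', taus M M1 /\ step M1 (Act p a) M1' /\ taus M1' M'.

Definition lrel := net -> (Loc -> Loc -> Prop) -> net -> Prop.

Definition localized (R : lrel) : Prop :=
  forall M E N, R M E N ->
    wf M /\ wf N /\ (forall x y, E x y -> locs M x /\ locs N y).

Definition symmetric_lrel (R : lrel) : Prop :=
  forall M E N, R M E N -> R N (fun x y => E y x) M.

Definition weak_bisim (R : lrel) : Prop :=
  localized R /\ symmetric_lrel R /\
  forall M E N, R M E N ->
    (forall M', step M Tau M' -> exists N', taus N N' /\ R M' E N') /\
    (forall p a M', step M (Act p a) M' ->
       exists q N', E p q /\ wstep N q a N' /\ R M' E N').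

Definition adapted (D D' E : Loc -> Loc -> Prop) : Prop :=
  forall a b b', E b b' -> (D a b <-> D' a b').

(* The (maximal) parallel extension of R: all triples
   (O (+)_C M, Id_|O| u E, O (+)_D N) with (M,E,N) in R and (C,D,E) adapted
   (relations on location pairs are compared extensionally). *)
Definition par_ext (R : lrel) : lrel :=
  fun U F V =>
    exists O C D M E N,
      U = Par O C M /\ V = Par O D N /\ R M E N /\ adapted C D E /\
      wf U /\ wf V /\
      (forall x y, F x y <-> ((x = y /\ locs O x) \/ E x y)).

Definition is_par_ext (R R' : lrel) : Prop :=
  forall U F V, R' U F V -> par_ext R U F V.

End Calculus.

Arguments Tau {Loc Chan Val}.

(* Main.v *)
Require Import Defs.
From Stdlib Require Import List Relations.

Set Implicit Arguments.
Section Aux.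
Context {Loc Chan Val Proc : Type}.
Variable bstep : @graph Loc -> (Loc -> Proc) -> @label Loc Chan Val -> (Loc -> Proc) -> Prop.

Lemma step_locs : forall M l M', step bstep M l M' -> forall x, locs M x <-> locs M' x.
Proof.
  induction 1; simpl; intros x; try tauto.
  - rewrite (IHstep1 x), (IHstep2 x); tauto.
  - rewrite (IHstep1 x), (IHstep2 x); tauto.
  - rewrite (IHstep x); tauto.
  - rewrite (IHstep x); tauto.
  - apply IHstep.
  - apply IHstep.
Qed.

Lemma step_act_loc : forall M l M', step bstep M l M' ->
  forall p a, l = Act p a -> locs M p.
Proof.
  induction 1; simpl; intros p0 a0 E; try discriminate.
  - eapply H0; eauto.
  - inversion E; subst. left; eauto.
  - inversion E; subst. right; eauto.
  - left; eauto.
  - right; eauto.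
  - eauto.
Qed.

Lemma taus_locs : forall M M', taus bstep M M' -> forall x, locs M x <-> locs M' x.
Proof.
  induction 1; intros.
  - eapply step_locs; eauto.
  - tauto.
  - rewrite IHclos_refl_trans1; auto.
Qed.

Lemma wstep_locs : forall M p a M', wstep bstep M p a M' -> forall x, locs M x <-> locs M' x.
Proof.
  intros M p a M' (M1 & M1' & T1 & S & T2) x.
  rewrite (taus_locs T1), (step_locs S), (taus_locs T2). tauto.
Qed.

Lemma taus_parR : forall O D N N', taus bstep N N' -> taus bstep (Par O D N) (Par O D N').
Proof.
  induction 1.
  - apply rt_step. apply S_ParR; auto.
  - apply rt_refl.
  - eapply rt_trans; eauto.
Qed.

Lemma wstep_parR : forall O D N q a N', wstep bstep N q a N' ->
  wstep bstep (Par O D N) q a (Par O D N').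
Proof.
  intros O D N q a N' (M1 & M1' & T1 & S & T2).
  exists (Par O D M1), (Par O D M1'); repeat split.
  - apply taus_parR; auto.
  - apply S_ParR; auto.
  - apply taus_parR; auto.
Qed.

Lemma wf_par_change : forall (O N O' N' : @net Loc Chan Proc) D,
  wf (Par O D N) -> wf O' -> wf N' ->
  (forall x, locs O x <-> locs O' x) -> (forall x, locs N x <-> locs N' x) ->
  wf (Par O' D N').
Proof.
  simpl; intros O N O' N' D (W1 & W2 & W3 & W4) H1 H2 L1 L2.
  split; [auto|split; [auto|split]].
  - intros z a b. rewrite <- L1 in a. rewrite <- L2 in b. eauto.
  - intros z w d. rewrite <- L1, <- L2. apply (W4 z w d).
Qed.

Lemma step_wf : forall M l M', step bstep M l M' -> wf M -> wf M'.
Proof.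
  induction 1; simpl; intros W; auto;
  pose proof W as W'; destruct W' as (W1 & W2 & W3 & W4);
  eapply wf_par_change; eauto using step_locs; tauto.
Qed.

Lemma mk_par_ext : forall (R : @lrel Loc Chan Proc) (O O' M N : @net Loc Chan Proc) C D E F,
  R M E N -> adapted C D E -> wf (Par O' C M) -> wf (Par O' D N) ->
  (forall x, locs O x <-> locs O' x) ->
  (forall x y, F x y <-> ((x = y /\ locs O x) \/ E x y)) ->
  par_ext R (Par O' C M) F (Par O' D N).
Proof.
  intros R O O' M N C D E F HR Had W1 W2 L HF.
  exists O', C, D, M, E, N.
  refine (conj eq_refl (conj eq_refl (conj HR (conj Had (conj W1 (conj W2 _)))))).
  intros x y. rewrite HF, L. tauto.
Qed.

End Aux.

Theorem proposition2 (Loc Chan Val Proc : Type)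
  (bstep : @graph Loc -> (Loc -> Proc) -> @label Loc Chan Val -> (Loc -> Proc) -> Prop)
  (R : @lrel Loc Chan Proc) :
  weak_bisim bstep R -> weak_bisim bstep (par_ext R).
Proof.
  intros (Hloc & Hsym & Hsim).
  split; [|split].
  - intros U F V (O & C & D & M & E & N & -> & -> & HR & Had & WU & WV & HF).
    split; [auto|split; [auto|]].
    intros x y Fxy. apply HF in Fxy. simpl.
    destruct Fxy as [[<- Ox]|Exy]; [tauto|].
    destruct (Hloc _ _ _ HR) as (_ & _ & L). destruct (L _ _ Exy); tauto.
  - intros U F V (O & C & D & M & E & N & -> & -> & HR & Had & WU & WV & HF).
    exists O, D, C, N, (fun x y => E y x), M.
    refine (conj eq_refl (conj eq_refl (conj (Hsym _ _ _ HR) (conj _ (conj WV (conj WU _)))))).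
    + intros a0 b b' Eb. symmetry. apply Had; auto.
    + intros x y; split.
      * intros Fyx. apply HF in Fyx. destruct Fyx as [[-> Ox]|Exy]; auto.
      * intros [[-> Ox]|Exy]; apply HF; auto.
  - intros U F V (O & C & D & M & E & N & -> & -> & HR & Had & WU & WV & HF).
    pose proof WU as WU'. pose proof WV as WV'.
    simpl in WU', WV'.
    destruct WU' as (WO & WM & _ & _). destruct WV' as (_ & WN & _ & _).
    destruct (Hsim _ _ _ HR) as (Htau & Hact).
    split.
    + intros U' St. inversion St; subst.
      *
        match goal with H : step bstep O Tau ?X |- _ => rename X into O'; rename H into SO end.
        exists (Par O' D N). split.
        { apply rt_step. apply S_ParL; auto. }
        eapply mk_par_ext with (O := O); eauto;
          try (first [exact (step_locs SO) | tauto]).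
        { eapply wf_par_change; eauto using step_wf, step_locs. tauto. }
        { eapply wf_par_change; eauto using step_wf, step_locs. tauto. }
      *
        match goal with H : step bstep M Tau ?X |- _ => rename X into M1; rename H into SM end.
        destruct (Htau _ SM) as (N1 & TN & HR').
        exists (Par O D N1). split; [apply taus_parR; auto|].
        destruct (Hloc _ _ _ HR') as (WM' & WN' & _).
        eapply mk_par_ext with (O := O); eauto;
          try (first [exact (step_locs SO) | tauto]).
        { eapply wf_par_change; eauto using step_locs. tauto. }
        { eapply wf_par_change; eauto using taus_locs. tauto. }
    + intros p a U' St. inversion St; subst.
      *
        match goal with H : step bstep O (Act _ _) ?X |- _ => rename X into O'; rename H into SO end.
        match goal with H : step bstep M (Act ?y _) ?X |- _ => rename X into M1; rename H into SM; rename y into q end.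
        match goal with H : C _ _ |- _ => rename H into Cpq end.
        destruct (Hact _ _ _ SM) as (q' & N' & Eq & (N1 & N1' & T1 & S1 & T2) & HR').
        destruct (Hloc _ _ _ HR') as (WM' & WN' & _).
        exists p, (Par O' D N'). repeat split.
        { apply HF. left. split; auto. eapply step_act_loc; eauto. }
        { exists (Par O D N1), (Par O' D N1'). repeat split.
          - apply taus_parR; auto.
          - eapply S_BcastL; eauto. apply (Had _ _ _ Eq); auto.
          - apply taus_parR; auto. }
        eapply mk_par_ext with (O := O); eauto;
          try (first [exact (step_locs SO) | tauto]).
        { eapply wf_par_change; eauto using step_locs, step_wf. }
        { eapply wf_par_change; eauto using step_locs, step_wf.
          intros x. rewrite (taus_locs T1), (step_locs S1), (taus_locs T2). tauto. }
      *
        match goal with H : step bstep O (Act ?y _) ?X |- _ => rename X into O'; rename H into SO; rename y into p0 end.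
        match goal with H : step bstep M (Act _ _) ?X |- _ => rename X into M1; rename H into SM end.
        match goal with H : C _ _ |- _ => rename H into Cpq end.
        destruct (Hact _ _ _ SM) as (q' & N' & Eq & (N1 & N1' & T1 & S1 & T2) & HR').
        destruct (Hloc _ _ _ HR') as (WM' & WN' & _).
        exists q', (Par O' D N'). repeat split.
        { apply HF. right. auto. }
        { exists (Par O D N1), (Par O' D N1'). repeat split.
          - apply taus_parR; auto.
          - eapply S_BcastR; eauto. apply (Had _ _ _ Eq); auto.
          - apply taus_parR; auto. }
        eapply mk_par_ext with (O := O); eauto;
          try (first [exact (step_locs SO) | tauto]).
        { eapply wf_par_change; eauto using step_locs, step_wf. }
        { eapply wf_par_change; eauto using step_locs, step_wf.
          intros x. rewrite (taus_locs T1), (step_locs S1), (taus_locs T2). tauto. }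
      *
        match goal with H : step bstep O _ ?X |- _ => rename X into O'; rename H into SO end.
        exists p, (Par O' D N). repeat split.
        { apply HF. left. split; auto. eapply step_act_loc; eauto. }
        { exists (Par O D N), (Par O' D N). repeat split.
          - apply rt_refl.
          - apply S_ParL; auto.
          - apply rt_refl. }
        eapply mk_par_ext with (O := O); eauto;
          try (first [exact (step_locs SO) | tauto]).
        { eapply wf_par_change; eauto using step_wf, step_locs. tauto. }
        { eapply wf_par_change; eauto using step_wf, step_locs. tauto. }
      *
        match goal with H : step bstep M _ ?X |- _ => rename X into M1; rename H into SM end.
        destruct (Hact _ _ _ SM) as (q & N' & Eq & W & HR').
        destruct (Hloc _ _ _ HR') as (WM' & WN' & _).
        exists q, (Par O D N'). repeat split.
        { apply HF. right. auto. }
        { apply wstep_parR; auto. }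
        eapply mk_par_ext with (O := O); eauto;
          try (first [exact (step_locs SO) | tauto]).
        { eapply wf_par_change; eauto using step_locs. tauto. }
        { eapply wf_par_change; eauto using wstep_locs. tauto. }
Qed.
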